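(* Let $G=(V,E,L)$ be a hypergraph with loops, and let $G_1,G_2$ be section hypergraphs of $G$ such that $G_1\cup G_2=G$, $G_1\cap G_2$ is a complete hypergraph, and $G_1\cap G_2$ has no plus loops. Then $\mathrm{PP}(G)$ is decomposable into $\mathrm{PP}(G_1)$ and $\mathrm{PP}(G_2)$, i.e., $$\mathrm{PP}(G)=\{z\in\mathbb{R}^{V\cup E\cup L}: z|_{G_1}\in\mathrm{PP}(G_1),\ z|_{G_2}\in\mathrm{PP}(G_2)\},$$ where $z|_{G_k}$ denotes the restriction of $z$ to the coordinates indexed by the nodes, edges and loops of $G_k$.
   Context: A hypergraph with loops is $G=(V,E,L)$: $V$ a finite node set, $E$ a set of subsets of $V$ of cardinality at least two, $L$ a set of loops $\{i,i\}$, $i\in V$, partitioned as $L=L^-\cup L^+$ (minus/plus loops). It is complete if $E$ consists of all subsets of $V$ of cardinality at least two. For $V'\subseteq V$, the section hypergraph induced by $V'$ is $(V',E',L')$ with $E'=\{e\in E: e\subseteq V'\}$, $L'=\{\{i,i\}\in L: i\in V'\}$, each loop keeping its sign. For $G_k=(V_k,E_k,L_k)$: $G_1\cap G_2:=(V_1\cap V_2,E_1\cap E_2,L_1\cap L_2)$ and $G_1\cup G_2:=(V_1\cup V_2,E_1\cup E_2,L_1\cup L_2)$. $\mathrm{PP}(G):=\mathrm{conv}\{z\in\mathbb{R}^{V\cup E\cup L}: z_{ii}\ge z_i^2\ \forall\{i,i\}\in L^+,\ z_{ii}\le z_i^2\ \forall \{i,i\}\in L^-,\ z_e=\prod_{i\in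 e}z_i\ \forall e\in E,\ z_i\in[0,1]\ \forall i\in V\}$. *)

(* Defs.v *)
From HB Require Import structures.
From mathcomp Require Import all_boot all_order all_algebra.
From mathcomp Require Import reals.
Set Implicit Arguments. Unset Strict Implicit. Unset Printing Implicit Defensive.
Import Order.TTheory GRing.Theory Num.Theory.
Local Open Scope ring_scope.

(* A hypergraph with loops over an ambient finite type T of potential nodes.
   Loops {i,i} are identified with the node i; hlminus / hlplus are the
   nodes carrying a minus / plus loop. *)
Record hgraph (T : finType) := HGraph {
  hnodes  : {set T};
  hedges  : {set {set T}};
  hlminus : {set T};
  hlplus  : {set T} }.

Definition hg_wf (T : finType) (G : hgraph T) : Prop :=
  [/\ forall e, e \in hedges G -> e \subset hnodes G /\ (1 < #|e|)%N,
      hlminus G \subset hnodes G,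
      hlplus G \subset hnodes G &
      [disjoint hlminus G & hlplus G]].

Definition section (T : finType) (G : hgraph T) (V' : {set T}) : hgraph T :=
  HGraph V' [set e in hedges G | e \subset V']
         (hlminus G :&: V') (hlplus G :&: V').

Definition hg_inter (T : finType) (G1 G2 : hgraph T) : hgraph T :=
  HGraph (hnodes G1 :&: hnodes G2) (hedges G1 :&: hedges G2)
         (hlminus G1 :&: hlminus G2) (hlplus G1 :&: hlplus G2).

Definition hg_union (T : finType) (G1 G2 : hgraph T) : hgraph T :=
  HGraph (hnodes G1 :|: hnodes G2) (hedges G1 :|: hedges G2)
         (hlminus G1 :|: hlminus G2) (hlplus G1 :|: hlplus G2).

Definition complete (T : finType) (G : hgraph T) : Prop :=
  hedges G = [set e : {set T} | (e \subset hnodes G) && (1 < #|e|)%N].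

Definition idx (T : finType) : finType := ((T + {set T}) + T)%type.
Definition cnode (T : finType) (i : T) : idx T := inl (inl i).
Definition cedge (T : finType) (e : {set T}) : idx T := inl (inr e).
Definition cloop (T : finType) (i : T) : idx T := inr i.

Definition coord (T : finType) (G : hgraph T) (k : idx T) : bool :=
  match k with
  | inl (inl i) => i \in hnodes G
  | inl (inr e) => e \in hedges G
  | inr i => (i \in hlminus G) || (i \in hlplus G)
  end.

(* A vector of R^{V ∪ E ∪ L} is encoded as a function idx T -> R that
   vanishes outside the coordinates of G. *)
Definition supported (R : realType) (T : finType) (G : hgraph T)
  (z : idx T -> R) : Prop := forall k, ~~ coord G k -> z k = 0.

Definition restr (R : realType) (T : finType) (H : hgraph T)
  (z : idx T -> R) : idx T -> R := fun k => if coord H k then z k else 0.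

Definition pp_feasible (R : realType) (T : finType) (G : hgraph T)
  (z : idx T -> R) : Prop :=
  [/\ supported G z,
      forall i, i \in hlplus G -> z (cloop i) >= z (cnode i) ^+ 2,
      forall i, i \in hlminus G -> z (cloop i) <= z (cnode i) ^+ 2,
      forall e, e \in hedges G -> z (cedge e) = \prod_(i in e) z (cnode i) &
      forall i, i \in hnodes G -> 0 <= z (cnode i) <= 1].

Definition conv (R : realType) (T : finType) (S : (idx T -> R) -> Prop)
  (z : idx T -> R) : Prop :=
  exists (n : nat) (lam : 'I_n -> R) (p : 'I_n -> idx T -> R),
    [/\ forall j, 0 <= lam j,
        \sum_(j < n) lam j = 1,
        forall j, S (p j) &
        forall k, z k = \sum_(j < n) lam j * p j k].

Definition PP (R : realType) (T : finType) (G : hgraph T) : (idx T -> R) -> Prop :=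
  conv (pp_feasible G).

(* Main.v *)
Require Import Defs.
From HB Require Import structures.
From mathcomp Require Import all_boot all_order all_algebra.
From mathcomp Require Import reals.
From mathcomp Require Import ring lra.
Set Implicit Arguments. Unset Strict Implicit. Unset Printing Implicit Defensive.
Import Order.TTheory GRing.Theory Num.Theory.
Local Open Scope ring_scope.

Section S.
Variables (R : realType) (T : finType).
Local Notation pt := (idx T -> R).

Definition convI (I : finType) (S : pt -> Prop) (z : pt) : Prop :=
  exists (lam : I -> R) (p : I -> pt),
    [/\ forall j, 0 <= lam j, \sum_j lam j = 1, forall j, S (p j) &
        forall k, z k = \sum_j lam j * p j k].

Lemma conv_convI S z : conv S z -> exists n, convI 'I_n S z.
Proof. by case=> n [lam [p [*]]]; exists n, lam, p. Qed.

Lemma convI_conv (I : finType) S z : convI I S z -> conv S z.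
Proof.
case=> lam [p [H0 H1 H2 H3]].
exists #|I|, (fun i => lam (enum_val i)), (fun i => p (enum_val i)).
have hb := onW_bij predT (@enum_val_bij I).
split => //.
- by rewrite -H1 (reindex _ hb).
- by move=> k; rewrite H3 (reindex _ hb).
Qed.

Lemma convI_mono (I : finType) (S S' : pt -> Prop) z :
  (forall q, S q -> S' q) -> convI I S z -> convI I S' z.
Proof. by move=> HS [lam [p [H0 H1 H2 H3]]]; exists lam, p; split=> // j; exact/HS/H2. Qed.

Lemma expect (y A B : T -> R) :
  \sum_(b : {set T}) (\prod_i (if i \in b then y i else 1 - y i)) *
     \prod_i (if i \in b then A i else B i)
  = \prod_i (y i * A i + (1 - y i) * B i).
Proof.
rewrite bigA_distr; apply: eq_bigr => b _.
rewrite -big_split /=; apply: eq_bigr => i _; by case: (i \in b).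
Qed.

Lemma prod_single (b : {set T}) (i : T) (a c : R) :
  \prod_j (if j \in b then (if j == i then a else 1) else (if j == i then c else 1))
  = if i \in b then a else c.
Proof.
rewrite (bigD1 i) //= eqxx big1 ?mulr1 //.
by move=> j /negbTE ->; case: (j \in b).
Qed.

Lemma expect1 (y : T -> R) (i : T) (a c : R) :
  \sum_(b : {set T}) (\prod_j (if j \in b then y j else 1 - y j)) *
     (if i \in b then a else c) = y i * a + (1 - y i) * c.
Proof.
under eq_bigr => b _ do rewrite -(prod_single b i a c).
rewrite expect (bigD1 i) //= eqxx big1 ?mulr1 //.
by move=> j /negbTE ->; rewrite !mulr1 subrKC.
Qed.

Lemma expect0 (y : T -> R) :
  \sum_(b : {set T}) (\prod_j (if j \in b then y j else 1 - y j)) = 1.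
Proof.
transitivity (\sum_(b : {set T}) (\prod_j (if j \in b then y j else 1 - y j)) *
     \prod_i (if i \in b then (fun _ => 1) i else (fun _ => 1 : R) i)).
  by apply: eq_bigr => b _; rewrite [X in _ = _ * X]big1 ?mulr1 // => i _; case: ifP.
by rewrite expect big1 // => i _; rewrite !mulr1 subrKC.
Qed.

Definition yv (W : {set T}) (p : pt) i : R := if i \in W then p (cnode i) else 1.
Definition wt (W : {set T}) (p : pt) (b : {set T}) : R :=
  \prod_i (if i \in b then yv W p i else 1 - yv W p i).
Definition nv (W : {set T}) (p : pt) (b : {set T}) i : R :=
  if i \in W then (if i \in b then 1 else 0) else p (cnode i).
Definition pb (H : hgraph T) (W : {set T}) (p : pt) b : pt := fun k =>
  match k with
  | inl (inl i) => nv W p b i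
  | inl (inr e) => if e \in hedges H then \prod_(i in e) nv W p b i else p k
  | inr i => if (i \in W) && (i \in hlminus H) then
       (if i \in b then p (cloop i) + 1 - p (cnode i) else p (cloop i) - p (cnode i))
     else p k
  end.
Definition bin (W : {set T}) (q : pt) := forall i, i \in W -> q (cnode i) = 0 \/ q (cnode i) = 1.

Lemma pb_node H W p b i : pb H W p b (cnode i) = nv W p b i. Proof. by []. Qed.
Lemma pb_edge H W p b e : pb H W p b (cedge e) =
  if e \in hedges H then \prod_(i in e) nv W p b i else p (cedge e). Proof. by []. Qed.
Lemma pb_loop H W p b i : pb H W p b (cloop i) =
  if (i \in W) && (i \in hlminus H) then
       (if i \in b then p (cloop i) + 1 - p (cnode i) else p (cloop i) - p (cnode i))
     else p (cloop i). Proof. by []. Qed.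

Lemma sum_const W p (c : R) : \sum_b wt W p b * c = c.
Proof. by rewrite -big_distrl /= expect0 mul1r. Qed.

Lemma pb_sum H W p : pp_feasible H p -> forall k, \sum_b wt W p b * pb H W p b k = p k.
Proof.
case=> Hs Hp Hm He Hn [[i|e]|i].
- under eq_bigr => b _ do rewrite -/(cnode i) pb_node.
  rewrite /nv; case: (boolP (i \in W)) => iW; last exact: sum_const.
  by rewrite /wt expect1 /yv iW mulr1 mulr0 addr0.
- under eq_bigr => b _ do rewrite -/(cedge e) pb_edge.
  case: (boolP (e \in hedges H)) => eH; last exact: sum_const.
  transitivity (\sum_b wt W p b * \prod_i (if i \in b then
       (if i \in e then (if i \in W then 1 else p (cnode i)) else 1) else
       (if i \in e then (if i \in W then 0 else p (cnode i)) else 1))).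
    apply: eq_bigr => b _; congr (_ * _); rewrite big_mkcond; apply: eq_bigr => i _.
    by rewrite /nv; case: (i \in e); case: (i \in W); case: (i \in b).
  rewrite /wt expect /cedge (He e eH) [RHS]big_mkcond; apply: eq_bigr => i _ /=.
  by rewrite /yv; case: (i \in e); case: (i \in W); rewrite ?mulr1 ?mulr0 ?addr0 ?mul1r ?subrr ?mul0r ?addr0 ?subrKC.
- under eq_bigr => b _ do rewrite -/(cloop i) pb_loop.
  case: (boolP ((i \in W) && (i \in hlminus H))) => iW; last exact: sum_const.
  rewrite /wt expect1 /yv; case/andP: iW => -> _.
  rewrite /cloop /cnode; set a := p (inr i); set c := p (inl (inl i)).
  rewrite -/(cloop i); lra.
Qed.

Lemma wt_ge0 (H : hgraph T) (W : {set T}) (p : pt) (b : {set T}) : W \subset hnodes H -> pp_feasible H p -> 0 <= wt W p b.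
Proof.
move=> sW [_ _ _ _ Hn]; apply: prodr_ge0 => i _; rewrite /yv.
case: (boolP (i \in W)) => iW; last by case: (i \in b); rewrite ?subrr ?ler01 ?lexx.
have /andP[h0 h1] := Hn i (subsetP sW i iW).
by case: (i \in b); rewrite ?subr_ge0.
Qed.

Lemma pb_feas (H : hgraph T) (W : {set T}) (p : pt) (b : {set T}) : W \subset hnodes H ->
  (forall i, i \in W -> i \notin hlplus H) -> pp_feasible H p ->
  pp_feasible H (pb H W p b) /\ bin W (pb H W p b).
Proof.
move=> sW nP [Hs Hp Hm He Hn]; split; last first.
  by move=> i iW; rewrite /= /nv iW; case: (i \in b); [right|left].
split.
- move=> [[i|e]|i] hc.
  + rewrite -/(cnode i) pb_node /nv; case: (boolP (i \in W)) => iW.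
      by move: hc; rewrite /= (subsetP sW i iW).
    exact: (Hs (cnode i) hc).
  + rewrite -/(cedge e) pb_edge; move: (hc) => /= /negbTE ->; exact: (Hs (cedge e) hc).
  + rewrite -/(cloop i) pb_loop; move: (hc); rewrite /= negb_or => /andP[/negbTE -> _].
    rewrite andbF; exact: (Hs (cloop i) hc).
- move=> i iP /=; have iW : i \in W = false.
    by apply/negbTE; apply: contraL iP; apply: nP.
  by rewrite iW /nv iW; apply: Hp.
- move=> i iM /=; rewrite iM andbT /nv; case: ifP => iW; last by apply: Hm.
  have /andP[h0 h1] := Hn i (subsetP sW i iW); have h2 := Hm i iM.
  move: h0 h1 h2; rewrite /cloop /cnode; set a := p (inr i); set c := p (inl (inl i)).
  by case: (i \in b) => *; rewrite ?expr1n ?expr0n /=; nra.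
- by move=> e eH /=; rewrite eH.
- move=> i iH /=; rewrite /nv; case: ifP => iW; last exact: Hn.
  by case: (i \in b); rewrite ?lexx ?ler01.
Qed.

Lemma binarize (I : finType) (H : hgraph T) (W : {set T}) (z : pt) : W \subset hnodes H ->
  (forall i, i \in W -> i \notin hlplus H) -> convI I (pp_feasible H) z ->
  convI (prod I {set T}) (fun q => pp_feasible H q /\ bin W q) z.
Proof.
move=> sW nP [lam [p [H0 H1 H2 H3]]].
exists (fun x => lam x.1 * wt W (p x.1) x.2), (fun x => pb H W (p x.1) x.2).
split.
- by move=> [j b]; rewrite mulr_ge0 // (wt_ge0 _ sW).
- rewrite -(pair_bigA _ (fun j b => lam j * wt W (p j) b)) /= -H1; apply: eq_bigr => j _.
  by rewrite -big_distrr /= expect0 mulr1.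
- by move=> [j b]; apply: pb_feas.
- move=> k; rewrite H3 -(pair_bigA _ (fun j b => lam j * wt W (p j) b * pb H W (p j) b k)) /=; apply: eq_bigr => j _.
  rewrite -(pb_sum W (H2 j) k) big_distrr /=; apply: eq_bigr => b _.
  by rewrite mulrA.
Qed.

Definition agree (W : {set T}) (x r : pt) : bool :=
  [forall i in W, x (cnode i) == r (cnode i)].
Definition ca (W : {set T}) (r : pt) i : R :=
  if i \in W then (if r (cnode i) == 1 then 0 else 1) else 1.
Definition cd (W : {set T}) (r : pt) i : R :=
  if i \in W then (if r (cnode i) == 1 then 1 else -1) else 0.
Definition ff (W : {set T}) (r x : pt) : R :=
  \prod_i (ca W r i + cd W r i * x (cnode i)).

Lemma agree_refl (W : {set T}) (x : pt) : agree W x x.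
Proof. by apply/forall_inP => i _. Qed.

Lemma agree_sym (W : {set T}) (x y : pt) : agree W x y = agree W y x.
Proof. by apply/forall_inP/forall_inP => h i iW; rewrite eq_sym h. Qed.

Lemma agree_eq (W : {set T}) (a b c : pt) : agree W a b -> agree W c a = agree W c b.
Proof.
move=> /forall_inP hab; apply/forall_inP/forall_inP => h i iW.
  by rewrite -(eqP (hab i iW)) h.
by rewrite (eqP (hab i iW)) h.
Qed.

Lemma ff_bin (W : {set T}) (r x : pt) : bin W x -> bin W r -> ff W r x = (agree W x r)%:R.
Proof.
have h01 : (0 == 1 :> R) = false by rewrite eq_sym oner_eq0.
move=> bx br; rewrite /ff; case: (boolP (agree W x r)) => [/forall_inP Ha | Hna].
- rewrite big1 // => i _; rewrite /ca /cd; case: (boolP (i \in W)) => iW;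
    last by rewrite mul0r addr0.
  rewrite (eqP (Ha i iW)).
  by case: (br i iW) => ->; rewrite ?h01 ?eqxx /=; ring.
- move/forall_inPn: Hna => [i iW hne]; rewrite (bigD1 i) //= /ca /cd iW.
  case: (br i iW) hne => -> hne; case: (bx i iW) hne => -> hne;
    rewrite ?eqxx // in hne; rewrite ?h01 ?eqxx /=.
    by rewrite mulr1 subrr mul0r.
  by rewrite mulr0 addr0 mul0r.
Qed.

Definition cS (W : {set T}) (r : pt) (S : {set T}) : R :=
  \prod_i (if i \in S then cd W r i else ca W r i).

Lemma ff_exp (W : {set T}) (r x : pt) : ff W r x =
  \sum_(S : {set T}) cS W r S * \prod_(i in S) x (cnode i).
Proof.
rewrite /ff; under eq_bigr do rewrite addrC.
rewrite bigA_distr; apply: eq_bigr => S _.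
rewrite /cS [X in _ = _ * X]big_mkcond -big_split /=; apply: eq_bigr => i _.
by case: (i \in S); rewrite ?mulr1.
Qed.

Lemma cS0 (W : {set T}) (r : pt) (S : {set T}) : ~~ (S \subset W) -> cS W r S = 0.
Proof.
case/subsetPn => i iS iW; rewrite /cS (bigD1 i) //= iS /cd (negbTE iW).
by rewrite mul0r.
Qed.

Definition MS (S : {set T}) (z : pt) : R :=
  if (1 < #|S|)%N then z (cedge S) else \prod_(i in S) z (cnode i).

Lemma mono (I : finType) (H : hgraph T) (W : {set T}) (z : pt) (lam : I -> R) (p : I -> pt) :
  W \subset hnodes H ->
  (forall S : {set T}, S \subset W -> (1 < #|S|)%N -> S \in hedges H) ->
  (forall j, pp_feasible H (p j)) -> \sum_j lam j = 1 ->
  (forall k, restr H z k = \sum_j lam j * p j k) ->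
  forall S : {set T}, S \subset W -> \sum_j lam j * \prod_(i in S) p j (cnode i) = MS S z.
Proof.
move=> sW hE hp h1 h3 S sS; rewrite /MS; case: ifP => hS.
  have SH := hE S sS hS.
  under eq_bigr => j _ do (case: (hp j) => _ _ _ He _; rewrite -(He S SH)).
  by rewrite -h3 /restr /= SH.
have : (#|S| == 0)%N || (#|S| == 1)%N by case: #|S| hS => [|[|n]].
case/orP => [/eqP/cards0_eq -> | /cards1P [i SE]].
  by rewrite big_set0; under eq_bigr do rewrite big_set0 mulr1.
have iW : i \in W by apply: (subsetP sS); rewrite SE set11.
rewrite SE big_set1; under eq_bigr do rewrite big_set1.
by rewrite -h3 /restr /= (subsetP sW).
Qed.

Lemma phi (I : finType) (H : hgraph T) (W : {set T}) (z r : pt) (lam : I -> R) (p : I -> pt) :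
  W \subset hnodes H ->
  (forall S : {set T}, S \subset W -> (1 < #|S|)%N -> S \in hedges H) ->
  (forall j, pp_feasible H (p j)) -> \sum_j lam j = 1 ->
  (forall k, restr H z k = \sum_j lam j * p j k) ->
  \sum_j lam j * ff W r (p j) = \sum_(S : {set T}) cS W r S * MS S z.
Proof.
move=> sW hE hp h1 h3.
under eq_bigr do rewrite ff_exp big_distrr.
rewrite exchange_big; apply: eq_bigr => S _.
case: (boolP (S \subset W)) => sS; last first.
  by rewrite cS0 // mul0r big1 // => j _ /=; rewrite mul0r mulr0.
rewrite -(mono sW hE hp h1 h3 sS) big_distrr; apply: eq_bigr => j _.
by rewrite /= mulrCA.
Qed.

Lemma coord_union (A B : hgraph T) (k : idx T) : Defs.coord (hg_union A B) k = Defs.coord A k || Defs.coord B k.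
Proof.
case: k => [[i|e]|i]; rewrite /= !inE //.
by case: (i \in hlminus A); case: (i \in hlminus B); case: (i \in hlplus A);
   case: (i \in hlplus B).
Qed.

Lemma coord_sec (G : hgraph T) (V : {set T}) (k : idx T) : V \subset hnodes G ->
  Defs.coord (section G V) k -> Defs.coord G k.
Proof.
move=> sV; case: k => [[i|e]|i]; rewrite /= ?inE.
- exact: (subsetP sV).
- by case/andP.
- by case/orP => /andP[-> _]; rewrite ?orbT.
Qed.

Lemma zero_feas (G : hgraph T) : hg_wf G -> pp_feasible G (fun _ => 0 : R).
Proof.
case=> hE _ _ _; split => //.
- by move=> i _; rewrite expr0n.
- by move=> i _; rewrite expr0n.
- move=> e eG; have [_ he] := hE e eG.
  have [i ie] : exists i, i \in e by apply/card_gt0P; apply: ltn_trans he.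
  by rewrite (bigD1 i) //= mul0r.
- by move=> i _; rewrite lexx ler01.
Qed.

Lemma restr_feas (G : hgraph T) (V : {set T}) (p : pt) : V \subset hnodes G -> pp_feasible G p ->
  pp_feasible (section G V) (restr (section G V) p).
Proof.
move=> sV [Hs Hp Hm He Hn]; split.
- by move=> k hk; rewrite /restr (negbTE hk).
- move=> i; rewrite /restr /= !inE => /andP[iP iV]; rewrite iV iP orbT.
  exact: Hp.
- move=> i; rewrite /restr /= !inE => /andP[iM iV]; rewrite iV iM.
  exact: Hm.
- move=> e; rewrite /restr /= !inE => /andP[eG eV]; rewrite eG eV He //.
  by apply: eq_bigr => i ie; rewrite (subsetP eV).
- by move=> i; rewrite /restr /= => iV; rewrite iV; apply: Hn; apply: (subsetP sV).
Qed.

Lemma glue_feas (G : hgraph T) (V1 V2 : {set T}) (p q : pt) :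
  hg_wf G -> hg_union (section G V1) (section G V2) = G ->
  V1 \subset hnodes G -> V2 \subset hnodes G ->
  pp_feasible (section G V1) p -> pp_feasible (section G V2) q ->
  agree (V1 :&: V2) p q ->
  pp_feasible G (fun k => if Defs.coord (section G V1) k then p k else q k).
Proof.
case=> _ sM sP _ HU s1 s2 [Hs1 Hp1 Hm1 He1 Hn1] [Hs2 Hp2 Hm2 He2 Hn2] /forall_inP Ha.
have nG : hnodes G = V1 :|: V2 by rewrite -{1}HU.
have eG : hedges G = hedges (section G V1) :|: hedges (section G V2) by rewrite -{1}HU.
split.
- move=> k hk.
  have h1 : Defs.coord (section G V1) k = false.
    by apply/negbTE; apply: contra hk; apply: coord_sec.
  rewrite h1 (Hs2 k) //; apply: contra hk; exact: coord_sec.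
- move=> i iP /=; have : i \in V1 :|: V2 by rewrite -nG (subsetP sP).
  rewrite inE; case: (boolP (i \in V1)) => iV1 /= iV.
  + rewrite !inE iV1 iP ?andbT ?orbT /=; apply: Hp1; by rewrite !inE iP iV1.
  + rewrite !inE (negbTE iV1) ?andbF /=; apply: Hp2; by rewrite !inE iP iV.
- move=> i iM /=; have : i \in V1 :|: V2 by rewrite -nG (subsetP sM).
  rewrite inE; case: (boolP (i \in V1)) => iV1 /= iV.
  + rewrite !inE iV1 iM ?andbT ?orbT /=; apply: Hm1; by rewrite !inE iM iV1.
  + rewrite !inE (negbTE iV1) ?andbF /=; apply: Hm2; by rewrite !inE iM iV.
- move=> e eGe; rewrite /= inE eGe /=.
  case: (boolP (e \subset V1)) => eV1.
  + rewrite He1; last by rewrite inE eGe eV1.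
    by apply: eq_bigr => i ie; rewrite (subsetP eV1 i ie).
  + have : e \in hedges (section G V2).
      by move: eGe; rewrite eG inE => /orP[|//]; rewrite inE => /andP[_ /(negP eV1)].
    move=> e2; rewrite He2 //; move: e2; rewrite inE => /andP[_ eV2].
    apply: eq_bigr => i ie; case: ifP => iV1 //.
    by rewrite (eqP (Ha i _)) // inE iV1 (subsetP eV2).
- move=> i; rewrite nG inE /=; case: (boolP (i \in V1)) => iV1 /= iV.
  + exact: Hn1.
  + exact: Hn2.
Qed.

Lemma glue (G : hgraph T) (V1 V2 : {set T}) (I1 I2 : finType) (z : pt) :
  hg_wf G -> V1 \subset hnodes G -> V2 \subset hnodes G ->
  hg_union (section G V1) (section G V2) = G ->
  (forall S : {set T}, S \subset V1 :&: V2 -> (1 < #|S|)%N -> S \in hedges G) ->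
  supported G z ->
  convI I1 (fun q => pp_feasible (section G V1) q /\ bin (V1 :&: V2) q)
    (restr (section G V1) z) ->
  convI I2 (fun q => pp_feasible (section G V2) q /\ bin (V1 :&: V2) q)
    (restr (section G V2) z) ->
  convI (prod I1 I2) (pp_feasible G) z.
Proof.
move=> wf s1 s2 HU hE sz [lam [p [l0 l1 lp l3]]] [mu [q [m0 m1 mq m3]]].
set W := V1 :&: V2.
have hE1 : forall S : {set T}, S \subset W -> (1 < #|S|)%N -> S \in hedges (section G V1).
  by move=> S sS hS; rewrite inE hE // (subset_trans sS) // subsetIl.
have hE2 : forall S : {set T}, S \subset W -> (1 < #|S|)%N -> S \in hedges (section G V2).
  by move=> S sS hS; rewrite inE hE // (subset_trans sS) // subsetIr.
have sW1 : W \subset hnodes (section G V1) := subsetIl V1 V2.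
have sW2 : W \subset hnodes (section G V2) := subsetIr V1 V2.
have KE : forall r, bin W r -> \sum_j lam j * (agree W (p j) r)%:R =
                                 \sum_l mu l * (agree W (q l) r)%:R.
  move=> r br.
  transitivity (\sum_j lam j * ff W r (p j)).
    by apply: eq_bigr => j _; rewrite ff_bin //; case: (lp j).
  rewrite (phi r sW1 hE1 (fun j => (lp j).1) l1 l3).
  rewrite -(phi r sW2 hE2 (fun l => (mq l).1) m1 m3).
  by apply: eq_bigr => l _; rewrite ff_bin //; case: (mq l).
pose A j := \sum_l mu l * (agree W (q l) (p j))%:R.
pose B l := \sum_l' mu l' * (agree W (q l') (q l))%:R.
have A0 : forall j, 0 <= A j.
  by move=> j; apply: sumr_ge0 => l _; rewrite mulr_ge0 ?ler0n.
have A_ge : forall j, lam j <= A j.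
  move=> j; rewrite /A -KE; last by case: (lp j).
  rewrite (bigD1 j) //= agree_refl mulr1 lerDl; apply: sumr_ge0 => j' _.
  by rewrite mulr_ge0 ?ler0n.
have B_ge : forall l, mu l <= B l.
  move=> l; rewrite /B (bigD1 l) //= agree_refl mulr1 lerDl; apply: sumr_ge0 => l' _.
  by rewrite mulr_ge0 ?ler0n.
have F1 : forall j, \sum_l lam j * mu l * (agree W (p j) (q l))%:R / A j = lam j.
  move=> j; transitivity (lam j / A j * A j).
    rewrite /A big_distrr; apply: eq_bigr => l _ /=; rewrite agree_sym.
    by ring.
  have [Ej|nz] := eqVneq (A j) 0; last by rewrite divfK.
  rewrite Ej mulr0; apply/esym/eqP; rewrite eq_le l0 andbT -Ej; exact: A_ge.
have F2 : forall l, \sum_j lam j * mu l * (agree W (p j) (q l))%:R / A j = mu l.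
  move=> l; transitivity (mu l / B l * B l).
    rewrite [X in _ = _ * X](_ : B l = \sum_j lam j * (agree W (p j) (q l))%:R);
      last by rewrite /B KE //; case: (mq l).
    rewrite big_distrr; apply: eq_bigr => j _ /=.
    case: (boolP (agree W (p j) (q l))) => h; last by rewrite !mulr0 !mul0r.
    have -> : A j = B l by apply: eq_bigr => l' _; rewrite (agree_eq _ h).
    by ring.
  have [Ej|nz] := eqVneq (B l) 0; last by rewrite divfK.
  rewrite Ej mulr0; apply/esym/eqP; rewrite eq_le m0 andbT -Ej; exact: B_ge.
exists (fun x => lam x.1 * mu x.2 * (agree W (p x.1) (q x.2))%:R / A x.1).
exists (fun x => if agree W (p x.1) (q x.2) then
   (fun k => if Defs.coord (section G V1) k then p x.1 k else q x.2 k) else (fun _ => 0)).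
split.
- by move=> [j l] /=; rewrite divr_ge0 ?mulr_ge0 ?ler0n.
- rewrite -(pair_bigA _ (fun j l => lam j * mu l * (agree W (p j) (q l))%:R / A j)) /=.
  by under eq_bigr do rewrite F1.
- move=> [j l] /=; case: ifP => h; last exact: zero_feas.
  exact: (glue_feas wf HU s1 s2 (lp j).1 (mq l).1 h).
- move=> k.
  transitivity (\sum_(x : prod I1 I2) lam x.1 * mu x.2 * (agree W (p x.1) (q x.2))%:R / A x.1 *
       (if Defs.coord (section G V1) k then p x.1 k else q x.2 k)); last first.
    apply: eq_bigr => [[j l]] _ /=; case: (boolP (agree W (p j) (q l))) => h /=; first by [].
    by rewrite mulr0 !mul0r.
  case: (boolP (Defs.coord (section G V1) k)) => hk.
  + rewrite -(pair_bigA _ (fun j l => lam j * mu l * (agree W (p j) (q l))%:R / A j * p j k)) /=.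
    under eq_bigr do rewrite -big_distrl /= F1.
    by rewrite -l3 /restr hk.
  + rewrite -(pair_bigA _ (fun j l => lam j * mu l * (agree W (p j) (q l))%:R / A j * q l k)) /=.
    rewrite exchange_big /=.
    under eq_bigr do rewrite -big_distrl /= F2.
    rewrite -m3 /restr; case: ifP => // h2.
    apply: sz; rewrite -HU coord_union (negbTE hk) h2 //.
Qed.
End S.

Theorem corollary1 (R : realType) (T : finType) (G : hgraph T)
    (V1 V2 : {set T}) :
  hg_wf G ->
  V1 \subset hnodes G -> V2 \subset hnodes G ->
  hg_union (section G V1) (section G V2) = G ->
  complete (hg_inter (section G V1) (section G V2)) ->
  hlplus (hg_inter (section G V1) (section G V2)) = set0 ->
  forall z : idx T -> R,
    PP G z <->
    [/\ supported G z, PP (section G V1) (restr (section G V1) z)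
      & PP (section G V2) (restr (section G V2) z)].
Proof.
move=> wf s1 s2 HU Hc Hp0 z; split.
- case=> n [lam [p [l0 l1 lp l3]]]; split.
  + move=> k hk; rewrite l3 big1 // => j _; case: (lp j) => Hs _ _ _ _.
    by rewrite Hs ?mulr0.
  + exists n, lam, (fun j => restr (section G V1) (p j)); split => //.
      by move=> j; exact: restr_feas s1 (lp j).
    move=> k; rewrite /restr; case: ifP => _; first exact: l3.
    by rewrite big1 // => j _; rewrite mulr0.
  + exists n, lam, (fun j => restr (section G V2) (p j)); split => //.
      by move=> j; exact: restr_feas s2 (lp j).
    move=> k; rewrite /restr; case: ifP => _; first exact: l3.
    by rewrite big1 // => j _; rewrite mulr0.
- case=> sz h1 h2.
  have hE : forall S : {set T}, S \subset V1 :&: V2 -> (1 < #|S|)%N -> S \in hedges G.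
    move=> S sS hS; move: Hc; rewrite /complete /= => Hc.
    have : S \in [set e : {set T} | (e \subset V1 :&: V2) && (1 < #|e|)%N].
      by rewrite inE sS hS.
    by rewrite -Hc !inE => /andP[/andP[-> _] _].
  have nP1 : forall i, i \in V1 :&: V2 -> i \notin hlplus (section G V1).
    move=> i iW; apply/negP => iP.
    have : i \in hlplus (hg_inter (section G V1) (section G V2)).
      move: iW iP; rewrite /= !inE => /andP[-> ->] /andP[-> _] //.
    by rewrite Hp0 inE.
  have nP2 : forall i, i \in V1 :&: V2 -> i \notin hlplus (section G V2).
    move=> i iW; apply/negP => iP.
    have : i \in hlplus (hg_inter (section G V1) (section G V2)).
      move: iW iP; rewrite /= !inE => /andP[-> ->] /andP[-> _] //.
    by rewrite Hp0 inE.
  have [n1 c1] := conv_convI h1.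
  have [n2 c2] := conv_convI h2.
  have b1 := @binarize _ _ _ (section G V1) _ _ (subsetIl V1 V2) nP1 c1.
  have b2 := @binarize _ _ _ (section G V2) _ _ (subsetIr V1 V2) nP2 c2.
  apply: convI_conv; exact: glue wf s1 s2 HU hE sz b1 b2.
Qed.
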